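(* Let $Q=[u_1,u_2,u_3,u_4,u_5,u_6]\subset\mathbb{S}^2$ be a spherical polygon not contained in any closed hemisphere and without self-intersections and antipodal intersections. Then $Q$ has 6 inflections.
   Context: A spherical polygon $Q=[u_1,\dots,u_n]$ has edges the minimal great-circle arcs from $u_i$ to $u_{i+1}$ (indices mod $n$). Standing assumption: no three vertices lie on a common great circle. A self-intersection is a pair of non-adjacent edges that intersect; an antipodal intersection is a pair of non-adjacent edges $e,f$ with $e\cap(-f)\ne\emptyset$. With $[a,b,c]$ the determinant, $\{u_i,u_{i+1}\}$ is an inflection if $[u_{i-1},u_i,u_{i+1}]$ and $[u_i,u_{i+1},u_{i+2}]$ have opposite signs. *)

(* Defs.v *)
From HB Require Import structures.
From mathcomp Require Import all_boot all_order all_algebra.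
From mathcomp Require Import reals.
Set Implicit Arguments. Unset Strict Implicit. Unset Printing Implicit Defensive.
Import Order.TTheory GRing.Theory Num.Theory.
Local Open Scope ring_scope.

Section Spherical.
Variable R : realType.

Definition dotv (x y : 'rV[R]_3) : R := (x *m y^T) 0 0.

Definition on_sphere (x : 'rV[R]_3) : Prop := dotv x x = 1.

Definition det3 (a b c : 'rV[R]_3) : R :=
  \det (\matrix_(i < 3, j < 3)
          (if i == 0 :> nat then a 0 j else if i == 1 :> nat then b 0 j else c 0 j)).

(* The minimal great-circle arc from a to b (a, b on S^2, not antipodal):
   the unit vectors that are nonnegative combinations of a and b. *)
Definition arc (a b : 'rV[R]_3) (x : 'rV[R]_3) : Prop :=
  on_sphere x /\ exists l m : R, 0 <= l /\ 0 <= m /\ x = l *: a + m *: b.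

Variable n : nat.
Implicit Types (u : 'I_n -> 'rV[R]_3) (i j k : 'I_n).

(* Polygon Q = [u_0, ..., u_{n-1}], indices mod n. *)
Definition sphere_polygon u : Prop := forall i, on_sphere (u i).

(* Standing assumption: no three vertices on a common great circle. *)
Definition general_position u : Prop :=
  forall i j k, i != j -> j != k -> i != k -> det3 (u i) (u j) (u k) != 0.

Definition edge u i (x : 'rV[R]_3) : Prop := arc (u i) (u (ordS i)) x.

Definition adjacent_edges i j : bool := [|| i == j, j == ordS i | i == ordS j].

Definition has_self_intersection u : Prop :=
  exists i j, ~~ adjacent_edges i j /\ exists x, edge u i x /\ edge u j x.

Definition has_antipodal_intersection u : Prop :=
  exists i j, ~~ adjacent_edges i j /\ exists x, edge u i x /\ edge u j (- x).

Definition in_closed_hemisphere u : Prop :=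
  exists v : 'rV[R]_3, v != 0 /\ forall i, 0 <= dotv v (u i).

Definition opposite_signs (a b : R) : bool := ((a < 0) && (0 < b)) || ((0 < a) && (b < 0)).

Definition inflection u i : bool :=
  opposite_signs (det3 (u (ord_pred i)) (u i) (u (ordS i)))
                 (det3 (u i) (u (ordS i)) (u (ordS (ordS i)))).

Definition num_inflections u : nat := #|[set i | inflection u i]|.

End Spherical.

(* Main.v *)
Require Import Defs.
From HB Require Import structures.
From mathcomp Require Import all_boot all_order all_algebra.
From mathcomp Require Import reals ring lra.
Set Implicit Arguments. Unset Strict Implicit. Unset Printing Implicit Defensive.
Import Order.TTheory GRing.Theory Num.Theory.


Definition trips : seq (nat * nat * nat) :=
  [:: (0,1,2); (0,1,3); (0,1,4); (0,1,5); (0,2,3); (0,2,4); (0,2,5); (0,3,4); (0,3,5); (0,4,5);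
      (1,2,3); (1,2,4); (1,2,5); (1,3,4); (1,3,5); (1,4,5); (2,3,4); (2,3,5); (2,4,5); (3,4,5)]%N.
Definition quads : seq (nat * nat * nat * nat) :=
  [:: (0,1,2,3); (0,1,2,4); (0,1,2,5); (0,1,3,4); (0,1,3,5); (0,1,4,5); (0,2,3,4); (0,2,3,5);
      (0,2,4,5); (0,3,4,5); (1,2,3,4); (1,2,3,5); (1,2,4,5); (1,3,4,5); (2,3,4,5)]%N.
Definition tab : seq (seq (seq nat)) := [:: [:: [:: 0; 0; 0; 0; 0; 0]; [:: 0; 0; 0; 1; 2; 3]; [:: 0; 0; 0; 4; 5; 6]; [:: 0; 0; 0; 0; 7; 8]; [:: 0; 0; 0; 0; 0; 9]; [:: 0; 0; 0; 0; 0; 0]]; [:: [:: 0; 0; 0; 0; 0; 0]; [:: 0; 0; 0; 0; 0; 0]; [:: 0; 0; 0; 10; 11; 12]; [:: 0; 0; 0; 0; 13; 14]; [:: 0; 0; 0; 0; 0; 15]; [:: 0; 0; 0; 0; 0; 0]]; [:: [:: 0; 0; 0; 0; 0; 0]; [:: 0; 0; 0; 0; 0; 0]; [:: 0; 0; 0; 0; 0; 0]; [:: 0; 0; 0; 0; 16; 17]; [:: 0; 0; 0; 0; 0; 18]; [:: 0; 0; 0; 0; 0; 0]]; [:: [:: 0; 0; 0; 0; 0; 0]; [:: 0; 0; 0; 0; 0; 0]; [:: 0; 0; 0; 0; 0; 0]; [:: 0; 0; 0; 0; 0; 0]; [:: 0; 0; 0; 0; 0; 19]; [:: 0; 0; 0;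 0; 0; 0]]; [:: [:: 0; 0; 0; 0; 0; 0]; [:: 0; 0; 0; 0; 0; 0]; [:: 0; 0; 0; 0; 0; 0]; [:: 0; 0; 0; 0; 0; 0]; [:: 0; 0; 0; 0; 0; 0]; [:: 0; 0; 0; 0; 0; 0]]; [:: [:: 0; 0; 0; 0; 0; 0]; [:: 0; 0; 0; 0; 0; 0]; [:: 0; 0; 0; 0; 0; 0]; [:: 0; 0; 0; 0; 0; 0]; [:: 0; 0; 0; 0; 0; 0]; [:: 0; 0; 0; 0; 0; 0]]].
Definition tidx (i j k : nat) := nth 0 (nth [::] (nth [::] tab i) j) k.

Inductive form := FT | FF | FA of nat | FN of form | FAnd of form & form | FOr of form & form.

Fixpoint eval (s : nat -> bool) (f : form) : bool :=
  match f with
  | FT => true | FF => false | FA n => s n | FN g => ~~ eval s g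
  | FAnd a b => eval s a && eval s b
  | FOr a b => eval s a || eval s b
  end.

Fixpoint peval (p : seq bool) (f : form) : option bool :=
  match f with
  | FT => Some true | FF => Some false
  | FA n => if n < size p then Some (nth false p n) else None
  | FN g => omap negb (peval p g)
  | FAnd a b => match peval p a, peval p b with
                | Some false, _ => Some false
                | _, Some false => Some false
                | Some true, Some true => Some true
                | _, _ => None end
  | FOr a b => match peval p a, peval p b with
                | Some true, _ => Some true
                | _, Some true => Some true
                | Some false, Some false => Some false
                | _, _ => None end
  end.

Lemma peval_sound p s f b : (forall n, n < size p -> s n = nth false p n) ->
  peval p f = Some b -> eval s f = b.
Proof.
move=> Hs; elim: f b => [||n|g IH|a IHa c IHc|a IHa c IHc] b /=.
- by case.
- by case.
- by case: ltnP => // /Hs -> [].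
- by case E: (peval p g) => [x|] //= [<-]; rewrite (IH x).
- case Ea: (peval p a) => [[]|]; case Ec: (peval p c) => [[]|] //= [<-];
    by rewrite ?(IHa _ Ea) ?(IHc _ Ec) ?andbF.
- case Ea: (peval p a) => [[]|]; case Ec: (peval p c) => [[]|] //= [<-];
    by rewrite ?(IHa _ Ea) ?(IHc _ Ec) ?orbT.
Qed.

Fixpoint search (n : nat) (fs : seq form) (p : seq bool) : bool :=
  if has (fun f => peval p f == Some false) fs then true else
  if n is n'.+1 then (if search n' fs (rcons p true) then search n' fs (rcons p false) else false)
  else false.

Lemma has_false s p fs : has (fun f => peval p f == Some false) fs ->
  (forall m, m < size p -> s m = nth false p m) -> ~~ all (eval s) fs.
Proof.
elim: fs => //= f fs IH /orP [/eqP Hp | H] Hs; first by rewrite (peval_sound Hs Hp).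
by rewrite (negbTE (IH H Hs)) andbF.
Qed.

Lemma searchP n fs p : search n fs p -> forall s, (forall m, m < size p -> s m = nth false p m) ->
  ~~ all (eval s) fs.
Proof.
elim: n p => [|n IH] p /=.
  by case: ifP => // H _ s Hs; apply: has_false H Hs.
case: ifP => [H _ s Hs|_]; first by apply: has_false H Hs.
case: ifP => // H1 H2 s Hs.
have Hs' : forall b, s (size p) = b -> forall m, m < size (rcons p b) -> s m = nth false (rcons p b) m.
  move=> b Hb m; rewrite size_rcons ltnS leq_eqVlt => /orP [/eqP ->|Hm].
    by rewrite nth_rcons ltnn eqxx.
  by rewrite nth_rcons Hm Hs.
by case Eb: (s (size p)); [apply: (IH _ H1) | apply: (IH _ H2)]; apply: Hs'.
Qed.

Definition sgF (i j k : nat) : form :=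
  if i < j then
    if j < k then FA (tidx i j k) else if i < k then FN (FA (tidx i k j)) else FA (tidx k i j)
  else
    if i < k then FN (FA (tidx j i k)) else if j < k then FA (tidx j k i) else FN (FA (tidx k j i)).

Definition FX a b := FOr (FAnd a (FN b)) (FAnd (FN a) b).
Definition FE a b := FN (FX a b).
Definition orF (l : seq form) := foldr FOr FF l.
Definition andF (l : seq form) := foldr FAnd FT l.

Definition sucn (i : nat) := i.+1 %% 6.
Definition predn6 (i : nat) := (i + 6).-1 %% 6.
Definition I6 := iota 0 6.
Definition nonadj i j := [&& i != j, j != sucn i & i != sucn j].

Definition pairs := [seq pq <- [seq (p, q) | p <- I6, q <- I6] | pq.1 < pq.2].
Definition coc_forms : seq form :=
  flatten [seq let: (p, q) := pq in
     [:: orF [seq sgF p q x | x <- I6 & (x != p) && (x != q)];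
         orF [seq FN (sgF p q x) | x <- I6 & (x != p) && (x != q)]] | pq <- pairs].

Definition nclist := [seq ij <- [seq (i, j) | i <- I6, j <- I6] | nonadj ij.1 ij.2].

Definition nc_forms : seq form :=
  [seq let: (i, j) := ij in
     FN (FAnd (FX (sgF i (sucn i) j) (sgF i (sucn i) (sucn j)))
              (FX (sgF j (sucn j) i) (sgF j (sucn j) (sucn i))))
  | ij <- nclist].

Definition gp_ok (at_ : nat * (nat * nat * nat * nat)) :=
   let: (a, (b, c, d, e)) := at_ in a \notin [:: b; c; d; e].
Definition gp_list := [seq at_ <- [seq (a, t) | a <- I6, t <- quads] | gp_ok at_].

Definition gp_forms : seq form :=
  flatten [seq let: (a, (b, c, d, e)) := at_ in
     let t1 := FE (sgF a b c) (sgF a d e) in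
     let t2 := FX (sgF a b d) (sgF a c e) in
     let t3 := FE (sgF a b e) (sgF a c d) in
     [:: FN (FAnd t1 (FAnd t2 t3)); FOr t1 (FOr t2 t3)] | at_ <- gp_list].

Definition concl_form : form :=
  andF [seq FX (sgF (predn6 i) i (sucn i)) (sgF i (sucn i) (sucn (sucn i))) | i <- I6].

Definition all_forms := coc_forms ++ nc_forms ++ gp_forms ++ [:: FN concl_form].

Lemma finite_check : search 20 all_forms [::].
Proof. vm_compute. reflexivity. Qed.

Local Open Scope ring_scope.

Definition co (R : realType) (x : 'rV[R]_3) (k : nat) := x 0 (inord k).
Lemma coE (R : realType) (x : 'rV[R]_3) i : x 0 i = co x (val i).
Proof. by rewrite /co inord_val. Qed.

Lemma det3E (R : realType) (a b c : 'rV[R]_3) : det3 a b c =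
  co a 0 * (co b 1 * co c 2 - co b 2 * co c 1)
 - co a 1 * (co b 0 * co c 2 - co b 2 * co c 0)
 + co a 2 * (co b 0 * co c 1 - co b 1 * co c 0).
Proof.
rewrite /det3 (expand_det_row _ 0) !big_ord_recl !big_ord0 /cofactor.
rewrite !(expand_det_row _ 0) !big_ord_recl !big_ord0 /cofactor !det_mx11.
rewrite !mxE /= !coE.
do 2 (change (bump 0 0) with 1%N; change (bump 0 1) with 2%N;
  change (bump 1 0) with 0%N; change (bump 1 1) with 2%N;
  change (bump 2 0) with 0%N; change (bump 2 1) with 1%N).
rewrite /=. ring.
Qed.

Lemma dotvE (R : realType) (x y : 'rV[R]_3) :
  dotv x y = co x 0 * co y 0 + co x 1 * co y 1 + co x 2 * co y 2.
Proof.
rewrite /dotv !mxE !big_ord_recl big_ord0 !mxE !coE.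
change (bump 0 0) with 1%N; change (bump 0 1) with 2%N.
rewrite /=; ring.
Qed.

Lemma coD (R : realType) (x y : 'rV[R]_3) k : co (x + y) k = co x k + co y k.
Proof. by rewrite /co mxE. Qed.
Lemma coZ (R : realType) (a : R) (x : 'rV[R]_3) k : co (a *: x) k = a * co x k.
Proof. by rewrite /co mxE. Qed.
Lemma coN (R : realType) (x : 'rV[R]_3) k : co (- x) k = - co x k.
Proof. by rewrite /co mxE. Qed.
Lemma coB (R : realType) (x y : 'rV[R]_3) k : co (x - y) k = co x k - co y k.
Proof. by rewrite coD coN. Qed.
Lemma co0 (R : realType) k : co (0 : 'rV[R]_3) k = 0.
Proof. by rewrite /co mxE. Qed.

Lemma rowv_eq (R : realType) (x y : 'rV[R]_3) :
  co x 0 = co y 0 -> co x 1 = co y 1 -> co x 2 = co y 2 -> x = y.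
Proof.
move=> h0 h1 h2; apply/rowP => j; rewrite !coE.
by case: j => [[|[|[|m]]] Hj] //=.
Qed.

Definition crossv (R : realType) (p q : 'rV[R]_3) : 'rV[R]_3 :=
  \row_(j < 3) (if val j == 0%N then co p 1 * co q 2 - co p 2 * co q 1
                else if val j == 1%N then co p 2 * co q 0 - co p 0 * co q 2
                else co p 0 * co q 1 - co p 1 * co q 0).

Lemma dotv_cross (R : realType) (p q y : 'rV[R]_3) : dotv (crossv p q) y = det3 p q y.
Proof.
have c k : (k < 3)%N -> co (crossv p q) k = if k == 0%N then co p 1 * co q 2 - co p 2 * co q 1
                else if k == 1%N then co p 2 * co q 0 - co p 0 * co q 2
                else co p 0 * co q 1 - co p 1 * co q 0.
  move=> hk; rewrite {1}/co mxE; have e : \val (inord k : 'I_3) = k by apply: inordK.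
  by rewrite e.
rewrite dotvE det3E !c //=; ring.
Qed.

Lemma dotvN (R : realType) (v y : 'rV[R]_3) : dotv (- v) y = - dotv v y.
Proof. rewrite !dotvE !coN; ring. Qed.

Lemma det3_swap12 (R : realType) (a b c : 'rV[R]_3) : det3 b a c = - det3 a b c.
Proof. rewrite !det3E; ring. Qed.
Lemma det3_swap23 (R : realType) (a b c : 'rV[R]_3) : det3 a c b = - det3 a b c.
Proof. rewrite !det3E; ring. Qed.
Lemma det3_cyc (R : realType) (a b c : 'rV[R]_3) : det3 b c a = det3 a b c.
Proof. rewrite !det3E; ring. Qed.
Lemma det3_aab (R : realType) (a b : 'rV[R]_3) : det3 a a b = 0.
Proof. rewrite !det3E; ring. Qed.
Lemma det3_aba (R : realType) (a b : 'rV[R]_3) : det3 a b a = 0.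
Proof. rewrite !det3E; ring. Qed.
Lemma det3_abb (R : realType) (a b : 'rV[R]_3) : det3 a b b = 0.
Proof. rewrite !det3E; ring. Qed.

Lemma det3_gp (R : realType) (a b c d e : 'rV[R]_3) :
  det3 a b c * det3 a d e - det3 a b d * det3 a c e + det3 a b e * det3 a c d = 0.
Proof. rewrite !det3E; ring. Qed.

Lemma neg_of (R : realType) (x : R) : x != 0 -> (0 < x) = false -> x < 0.
Proof. move=> h0 h; rewrite lt_neqAle h0 /= leNgt h //. Qed.

Lemma sgn2 (R : realType) (A B : R) : A != 0 -> B != 0 -> (0 < A) != (0 < B) ->
  (0 < A /\ B < 0) \/ (A < 0 /\ 0 < B).
Proof.
move=> hA hB; case: (boolP (0 < A)) => a; case: (boolP (0 < B)) => b //= _; [left|right];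
  split => //; apply: neg_of => //; exact: negbTE.
Qed.

Lemma dotv_ge0 (R : realType) (w : 'rV[R]_3) : 0 <= dotv w w.
Proof. rewrite dotvE; nra. Qed.

Lemma cross_int (R : realType) (p q r s : 'rV[R]_3) :
  det3 r s p != 0 -> det3 r s q != 0 -> det3 p q r != 0 -> det3 p q s != 0 ->
  (0 < det3 r s p) != (0 < det3 r s q) -> (0 < det3 p q r) != (0 < det3 p q s) ->
  (exists x, Defs.arc p q x /\ Defs.arc r s x) \/ (exists x, Defs.arc p q x /\ Defs.arc r s (- x)).
Proof.
move=> hA hB hC hE sAB sCE.
have wid : det3 r s p *: q - det3 r s q *: p = det3 p q s *: r - det3 p q r *: s.
  by apply: rowv_eq; rewrite !coB !coZ !det3E; ring.
have hwsp : det3 (det3 p q s *: r - det3 p q r *: s) s p = det3 p q s * det3 r s p.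
  by rewrite !det3E !coB !coZ; ring.
move: wid hwsp sAB sCE hA hB hC hE.
move: (det3 r s p) (det3 r s q) (det3 p q r) (det3 p q s) => A B C E.
move=> wid hwsp sAB sCE hA hB hC hE.
set w := A *: q - B *: p.
have hw0 : dotv w w != 0.
  apply/eqP => h0.
  have h: co w 0 = 0 /\ co w 1 = 0 /\ co w 2 = 0 by move: h0; rewrite dotvE => h0; nra.
  have : E * A = 0 by rewrite -hwsp -wid det3E; case: h => [-> [-> ->]]; ring.
  by move/eqP; rewrite mulf_eq0 (negbTE hE) (negbTE hA).
have hwp : 0 < dotv w w by rewrite lt_neqAle eq_sym hw0 dotv_ge0.
set N := Num.sqrt (dotv w w).
have hN : 0 < N by rewrite sqrtr_gt0.
have hN2 : N * N = dotv w w by rewrite -expr2 sqr_sqrtr // ltW.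
have sph : forall c : R, c * c = 1 -> on_sphere (c *: w) -> True by [].
have onx : on_sphere (N^-1 *: w).
  rewrite /on_sphere dotvE !coZ.
  have -> : N^-1 * co w 0 * (N^-1 * co w 0) + N^-1 * co w 1 * (N^-1 * co w 1) +
            N^-1 * co w 2 * (N^-1 * co w 2) = (N^-1 * N^-1) * dotv w w by rewrite dotvE; ring.
  by rewrite -hN2; field; rewrite gt_eqF.
have onN : forall x : 'rV[R]_3, on_sphere x -> on_sphere (- x).
  by move=> x; rewrite /on_sphere !dotvE !coN => <-; ring.
have hNi : 0 < N^-1 by rewrite invr_gt0.
have arcpos : forall a b (l m : R) x, 0 < l -> 0 < m -> x = N^-1 *: (l *: a + m *: b) ->
   on_sphere x -> Defs.arc a b x.
  move=> a b l m x hl hm -> ox; split => //; exists (N^-1 * l), (N^-1 * m); split; first by rewrite ltW // mulr_gt0.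
  split; first by rewrite ltW // mulr_gt0.
  by apply: rowv_eq; rewrite !coZ !coD !coZ; ring.
case: (sgn2 hA hB sAB) => [[hA' hB'] | [hA' hB']]; case: (sgn2 hC hE sCE) => [[hC' hE'] | [hC' hE']].
- right; exists (N^-1 *: w); split.
    by apply: (arcpos _ _ (- B) A) => //; [rewrite oppr_gt0 | rewrite /w addrC scaleNr -scaleNr].
  apply: (arcpos _ _ (- E) C) => //; first by rewrite oppr_gt0.
  - by rewrite /w wid -scalerN opprB addrC scaleNr -scaleNr.
  - exact: onN.
- left; exists (N^-1 *: w); split.
    by apply: (arcpos _ _ (- B) A) => //; [rewrite oppr_gt0 | rewrite /w addrC scaleNr -scaleNr].
  apply: (arcpos _ _ E (- C)) => //; first by rewrite oppr_gt0.
  by rewrite /w wid scaleNr.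
- left; exists (- (N^-1 *: w)); split.
  + apply: (arcpos _ _ B (- A)) => //; [rewrite oppr_gt0 // | | exact: onN].
    by rewrite /w -scalerN opprB scaleNr.
  + apply: (arcpos _ _ (- E) C) => //; [rewrite oppr_gt0 // | | exact: onN].
    by rewrite /w wid -scalerN opprB addrC scaleNr -scaleNr.
- right; exists (- (N^-1 *: w)); split.
  + apply: (arcpos _ _ B (- A)) => //; [rewrite oppr_gt0 // | | exact: onN].
    by rewrite /w -scalerN opprB scaleNr.
  + rewrite opprK; apply: (arcpos _ _ E (- C)) => //; first by rewrite oppr_gt0.
    by rewrite /w wid scaleNr.
Qed.


Lemma I6P i : (i \in I6) = (i < 6)%N.
Proof. by rewrite mem_iota. Qed.

Definition U (R : realType) (u : 'I_6 -> 'rV[R]_3) (i : nat) := u (inord i).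
Definition chi (R : realType) (u : 'I_6 -> 'rV[R]_3) i j k := (0 < det3 (U u i) (U u j) (U u k)).
Definition sreal (R : realType) (u : 'I_6 -> 'rV[R]_3) (n : nat) : bool :=
  let t := nth (0,0,0)%N trips n in chi u t.1.1 t.1.2 t.2.

Lemma UE (R : realType) (u : 'I_6 -> 'rV[R]_3) (k : 'I_6) : U u (val k) = u k.
Proof. by rewrite /U inord_val. Qed.

Lemma inord_neq i j : (i < 6)%N -> (j < 6)%N -> i != j -> (inord i : 'I_6) != inord j.
Proof. by move=> hi hj hij; apply/eqP => /(congr1 val); rewrite /= !inordK //; apply/eqP. Qed.

Lemma Dnz (R : realType) (u : 'I_6 -> 'rV[R]_3) : general_position u ->
  forall i j k, (i < 6)%N -> (j < 6)%N -> (k < 6)%N -> i != j -> j != k -> i != k ->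
  det3 (U u i) (U u j) (U u k) != 0.
Proof. by move=> gp i j k hi hj hk hij hjk hik; apply: gp; apply: inord_neq. Qed.

Lemma ltNz (R : realType) (x : R) : x != 0 -> (x < 0) = ~~ (0 < x).
Proof.
move=> h; case: (boolP (0 < x)) => a; first by rewrite lt_gtF.
by apply: neg_of => //; apply: negbTE.
Qed.

Lemma tidx_ok a b c : (a < b)%N -> (b < c)%N -> (c < 6)%N -> nth (0,0,0)%N trips (tidx a b c) = (a,b,c).
Proof.
move=> hab hbc hc.
have F : all (fun a => all (fun b => all (fun c =>
   ((a < b)%N && (b < c)%N) ==> (nth (0,0,0)%N trips (tidx a b c) == (a,b,c))) I6) I6) I6 by vm_compute.
have ha : (a < 6)%N by apply: ltn_trans hab (ltn_trans hbc hc).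
have hb : (b < 6)%N by apply: ltn_trans hbc hc.
move/allP/(_ a): F; rewrite I6P => /(_ ha) /allP /(_ b); rewrite I6P => /(_ hb) /allP /(_ c).
by rewrite I6P hab hbc => /(_ hc) /eqP.
Qed.

Lemma evalFN s f : eval s (FN f) = ~~ eval s f.
Proof. by []. Qed.

Lemma sgE (R : realType) (u : 'I_6 -> 'rV[R]_3) : general_position u ->
  forall i j k, (i < 6)%N -> (j < 6)%N -> (k < 6)%N -> i != j -> j != k -> i != k ->
  eval (sreal u) (sgF i j k) = chi u i j k.
Proof.
move=> gp.
have base : forall a b c, (a < b)%N -> (b < c)%N -> (c < 6)%N -> eval (sreal u) (FA (tidx a b c)) = chi u a b c.
  by move=> a b c hab hbc hc; rewrite /= /sreal tidx_ok.
move=> i j k hi hj hk hij hjk hik.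
have s12 : chi u j i k = ~~ chi u i j k.
  by rewrite /chi det3_swap12 oppr_gt0 ltNz // Dnz.
have s23 : chi u i k j = ~~ chi u i j k.
  by rewrite /chi det3_swap23 oppr_gt0 ltNz // Dnz.
have cy1 : chi u j k i = chi u i j k by rewrite /chi det3_cyc.
have cy2 : chi u k i j = chi u i j k by rewrite /chi -det3_cyc.
have s13 : chi u k j i = ~~ chi u i j k by rewrite -s12 /chi (det3_cyc (U u k)).
rewrite /sgF; case: (ltngtP i j) => hij'; last by move: hij; rewrite hij' eqxx.
- case: (ltngtP j k) => hjk'; last by move: hjk; rewrite hjk' eqxx.
  + exact: base.
  + case: (ltngtP i k) => hik'; last by move: hik; rewrite hik' eqxx.
    * by rewrite evalFN base // s23 negbK.
    * by rewrite base // cy2.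
- case: (ltngtP i k) => hik'; last by move: hik; rewrite hik' eqxx.
  + by rewrite evalFN base // s12 negbK.
  + case: (ltngtP j k) => hjk'; last by move: hjk; rewrite hjk' eqxx.
    * by rewrite base // cy1.
    * by rewrite evalFN base // s13 negbK.
Qed.

Lemma evalFX s a b : eval s (FX a b) = (eval s a != eval s b).
Proof. by rewrite /=; case: (eval s a); case: (eval s b). Qed.
Lemma evalFE s a b : eval s (FE a b) = (eval s a == eval s b).
Proof. by rewrite /=; case: (eval s a); case: (eval s b). Qed.
Lemma evalFAnd s a b : eval s (FAnd a b) = eval s a && eval s b.
Proof. by []. Qed.
Lemma evalFOr s a b : eval s (FOr a b) = eval s a || eval s b.
Proof. by []. Qed.
Lemma eval_orF s l : eval s (orF l) = has (eval s) l.
Proof. by elim: l => //= f l ->. Qed.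
Lemma eval_andF s l : eval s (andF l) = all (eval s) l.
Proof. by elim: l => //= f l ->. Qed.
Lemma all_flatten_map (T : Type) (P : pred form) (F : T -> seq form) l :
  all P (flatten [seq F x | x <- l]) = all (fun x => all P (F x)) l.
Proof. by elim: l => //= x l IH; rewrite all_cat IH. Qed.

Lemma all2E (T : Type) (P : pred T) a b : all P [:: a; b] = P a && P b.
Proof. by rewrite /= andbT. Qed.

Lemma all1E (T : Type) (P : pred T) a : all P [:: a] = P a.
Proof. by rewrite /= andbT. Qed.

Lemma neg_dir (R : realType) (u : 'I_6 -> 'rV[R]_3) : ~ in_closed_hemisphere u ->
  forall w, w != 0 -> exists I : 'I_6, dotv w (u I) < 0.
Proof.
move=> nh w hw; case: (boolP [forall I, 0 <= dotv w (u I)]) => [/forallP H | /forallPn [I HI]].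
  by exfalso; apply: nh; exists w; split.
by exists I; rewrite ltNge.
Qed.

Lemma coc_ok (R : realType) (u : 'I_6 -> 'rV[R]_3) : general_position u ->
  ~ in_closed_hemisphere u -> all (eval (sreal u)) coc_forms.
Proof.
move=> gp nh; rewrite /coc_forms all_flatten_map; apply/allP => -[p q] Hpq.
have : all (fun pq => [&& (pq.1 < pq.2)%N, (pq.2 < 6)%N & has (fun r => (r != pq.1) && (r != pq.2)) I6]) pairs
  by vm_compute.
move/allP/(_ _ Hpq) => /and3P [hpq hq Hr].
have [r hr /andP [hrp hrq]] := hasP Hr.
rewrite /= in hpq hq hrp hrq.
have hp : (p < 6)%N by apply: ltn_trans hpq hq.
have pq : p != q by rewrite neq_ltn hpq.
rewrite I6P in hr.
set v := crossv (U u p) (U u q).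
have hv : v != 0.
  have qr : q != r by rewrite eq_sym.
  have pr : p != r by rewrite eq_sym.
  apply/eqP => hv0; have := Dnz gp hp hq hr pq qr pr.
  by rewrite -dotv_cross -/v hv0 dotvE !co0 !mul0r !addr0 eqxx.
have key : forall I : 'I_6, det3 (U u p) (U u q) (U u (val I)) != 0 ->
    [&& val I != p & val I != q].
  move=> I hI; apply/andP; split; apply/eqP => e; move: hI; rewrite e ?det3_aba ?det3_abb eqxx //.
rewrite all2E !eval_orF !has_map; apply/andP; split; apply/hasP.
- case: (neg_dir nh (w := - v)) => [|I hI]; first by rewrite oppr_eq0.
  have hI' : 0 < det3 (U u p) (U u q) (U u (val I)).
    by rewrite -dotv_cross UE -/v; move: hI; rewrite dotvN oppr_lt0.
  have /andP [h1 h2] := key I (lt0r_neq0 hI').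
  exists (val I); first by rewrite mem_filter I6P ltn_ord h1 h2.
  change (eval (sreal u) (sgF p q (val I))).
  by rewrite (sgE gp hp hq (ltn_ord I) pq) // eq_sym.
- case: (neg_dir nh hv) => I hI.
  have hI' : det3 (U u p) (U u q) (U u (val I)) < 0 by rewrite -dotv_cross UE -/v.
  have /andP [h1 h2] := key I (ltr0_neq0 hI').
  exists (val I); first by rewrite mem_filter I6P ltn_ord h1 h2.
  change (~~ eval (sreal u) (sgF p q (val I))).
  by rewrite (sgE gp hp hq (ltn_ord I) pq) ?(eq_sym q) ?(eq_sym p) // /chi ltNge le_eqVlt hI' orbT.
Qed.

Lemma ordS_inord i : (i < 6)%N -> ordS (inord i : 'I_6) = inord (sucn i).
Proof.
move=> hi; apply: val_inj; rewrite /= inordK // inordK //.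
by rewrite /sucn ltn_pmod.
Qed.

Lemma nc_ok (R : realType) (u : 'I_6 -> 'rV[R]_3) : general_position u ->
  ~ has_self_intersection u -> ~ has_antipodal_intersection u ->
  all (eval (sreal u)) nc_forms.
Proof.
move=> gp nsi nai; rewrite /nc_forms all_map; apply/allP => -[i j] Hij.
have : all (fun ij => let: (i, j) := ij in
  [&& [&& (i < 6)%N, (j < 6)%N, (sucn i < 6)%N & (sucn j < 6)%N],
      [&& i != sucn i, j != sucn j, i != j & i != sucn j],
      [&& sucn i != j, sucn i != sucn j, j != sucn i & j != i] &
      [&& sucn j != i, sucn j != sucn i & nonadj i j]]) nclist by vm_compute.
move/allP/(_ _ Hij) => /and4P [/and4P [hi hj hsi hsj] /and4P [d1 d2 d3 d4] /and4P [d5 d6 d7 d8] /and3P [d9 d10 hna]].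
change (~~ eval (sreal u) (FAnd (FX (sgF i (sucn i) j) (sgF i (sucn i) (sucn j)))
              (FX (sgF j (sucn j) i) (sgF j (sucn j) (sucn i))))).
rewrite evalFAnd !evalFX !sgE //.
apply/negP => /andP [h1 h2].
have adj : ~~ adjacent_edges (inord i : 'I_6) (inord j).
  rewrite /adjacent_edges -!val_eqE /= !inordK //.
  by rewrite !negb_or; move: hna; rewrite /nonadj /sucn.
case: (@cross_int R (U u i) (U u (sucn i)) (U u j) (U u (sucn j))) => //;
  try (apply: Dnz => //; by rewrite eq_sym).
- move=> [x [hx1 hx2]]; apply: nsi; exists (inord i), (inord j); split => //.
  by exists x; rewrite /edge !ordS_inord.
- move=> [x [hx1 hx2]]; apply: nai; exists (inord i), (inord j); split => //.
  by exists x; rewrite /edge !ordS_inord.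
Qed.



Lemma eq_sgn (R : realType) (x y : R) : x != 0 -> y != 0 -> ((0 < x) == (0 < y)) = (0 < x * y).
Proof.
move=> hx hy.
have [a|a] : 0 < x \/ x < 0 by move: hx; rewrite neq_lt => /orP [] ->; auto.
- rewrite a pmulr_rgt0 //; by case: (0 < y).
- rewrite (lt_gtF a) nmulr_rgt0 // ltNz //; by case: (0 < y).
Qed.

Lemma gp_sign (R : realType) (x1 x2 x3 x4 x5 x6 : R) :
  x1 != 0 -> x2 != 0 -> x3 != 0 -> x4 != 0 -> x5 != 0 -> x6 != 0 ->
  x1 * x2 - x3 * x4 + x5 * x6 = 0 ->
  let t1 := (0 < x1) == (0 < x2) in let t2 := (0 < x3) != (0 < x4) in
  let t3 := (0 < x5) == (0 < x6) in
  ~~ [&& t1, t2 & t3] && [|| t1, t2 | t3].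
Proof.
move=> h1 h2 h3 h4 h5 h6 e /=.
rewrite !eq_sgn //.
have n12 : x1 * x2 != 0 by rewrite mulf_neq0.
have n34 : x3 * x4 != 0 by rewrite mulf_neq0.
have n56 : x5 * x6 != 0 by rewrite mulf_neq0.
move: e n12 n34 n56; move: (x1 * x2) (x3 * x4) (x5 * x6) => P Q S e nP nQ nS.
case: (boolP (0 < P)) => a; case: (boolP (0 < Q)) => b; case: (boolP (0 < S)) => c //=;
  have := neg_of nP; have := neg_of nQ; have := neg_of nS; 
  rewrite ?(negbTE a) ?(negbTE b) ?(negbTE c) => hc hb ha; 
  try have := hc erefl; try have := hb erefl; try have := ha erefl; lra.
Qed.

Lemma gp_forms_ok (R : realType) (u : 'I_6 -> 'rV[R]_3) : general_position u ->
  all (eval (sreal u)) gp_forms.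
Proof.
move=> gp; rewrite /gp_forms all_flatten_map; apply/allP => -[a [[[b c] d] e]] H.
have : all (fun t => let: (a, (b, c, d, e)) := t in
  [&& [&& (a < 6)%N, (b < 6)%N, (c < 6)%N & (d < 6)%N],
      [&& (e < 6)%N, a != b, a != c & a != d],
      [&& a != e, b != c, d != e & b != d] &
      [&& c != e, b != e & c != d]]) gp_list by vm_compute.
move/allP/(_ _ H) => /and4P [/and4P [ha hb hc hd] /and4P [he ab ac ad] /and4P [ae bc de bd] /and3P [ce be cd]].
rewrite all2E evalFN evalFOr !evalFAnd evalFOr !evalFE evalFX !sgE //.
have := @gp_sign R (det3 (U u a) (U u b) (U u c)) (det3 (U u a) (U u d) (U u e))
   (det3 (U u a) (U u b) (U u d)) (det3 (U u a) (U u c) (U u e))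
   (det3 (U u a) (U u b) (U u e)) (det3 (U u a) (U u c) (U u d)).
rewrite !Dnz // det3_gp; do !(move=> /(_ isT)); move=> /(_ erefl).
by rewrite /chi.
Qed.

Lemma opp_of (R : realType) (x y : R) : x != 0 -> y != 0 -> (0 < x) != (0 < y) -> opposite_signs x y.
Proof.
move=> hx hy h; rewrite /opposite_signs.
by case: (sgn2 hx hy h) => [[a b] | [a b]]; rewrite a b ?orbT.
Qed.

Theorem proposition4 (R : realType) (u : 'I_6 -> 'rV[R]_3) :
  sphere_polygon u ->
  general_position u ->
  ~ in_closed_hemisphere u ->
  ~ has_self_intersection u ->
  ~ has_antipodal_intersection u ->
  num_inflections u = 6%N.
Proof.
move=> _ gp nh nsi nai.
have := searchP finite_check (s := sreal u) (fun m (hm : (m < 0)%N) => match notF hm with end).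
rewrite /all_forms all_cat (coc_ok gp nh) all_cat (nc_ok gp nsi nai) all_cat (gp_forms_ok gp) all1E evalFN negbK.
rewrite eval_andF all_map => /allP Hc.
have Hinf : forall I : 'I_6, inflection u I.
  move=> I.
  have : all (fun i => [&& [&& (predn6 i < 6)%N, (i < 6)%N, (sucn i < 6)%N & (sucn (sucn i) < 6)%N],
     [&& predn6 i != i, i != sucn i, predn6 i != sucn i & sucn i != sucn (sucn i)] &
     i != sucn (sucn i)]) I6 by vm_compute.
  move/allP/(_ (val I)); rewrite I6P => /(_ (ltn_ord I)) /and3P [/and4P [h1 h2 h3 h4] /and4P [d1 d2 d3 d4] d5].
  have := Hc (val I); rewrite I6P => /(_ (ltn_ord I)) => hI.
  have {hI} : eval (sreal u) (FX (sgF (predn6 (val I)) (val I) (sucn (val I)))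
                 (sgF (val I) (sucn (val I)) (sucn (sucn (val I))))) := hI.
  rewrite evalFX !sgE // => hI.
  rewrite /inflection -!UE.
  change (val (ord_pred I)) with (predn6 (val I)).
  change (val (ordS (ordS I))) with (sucn (sucn (val I))).
  change (val (ordS I)) with (sucn (val I)).
  by apply: opp_of => //; apply: Dnz => //; rewrite eq_sym.
rewrite /num_inflections. have -> : [set i | inflection u i] = setT by apply/setP => i; rewrite !inE Hinf.
by rewrite cardsT card_ord.
Qed.
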